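(* Let $\Gamma = a : (\mathsf{Ref}~B)^{\diamond},\ b : (\mathsf{Ref}~B)^{\diamond},\ c : (\mathsf{Ref}~B)^{a,b}$, which is a well-formed context. Both $b$ and $c$ are valid qualifier differences between $c$ and $a$, i.e. each is a minimal qualifier $q$ with $\Gamma \vdash c <: a, q$. Moreover neither $\Gamma \vdash b <: c$ nor $\Gamma \vdash c <: b$ holds, so the two solutions are incomparable and no principal qualifier difference exists.
   Context: Setting: the reachability type system $\mathsf{G}^{\diamond}_{<:}$. Qualifiers are finite sets of variables possibly containing the freshness marker $\diamond$ (a fresh, unnamed location) and qualifier holes $\square$; $p,q$ denotes union. A context entry $x : T^{q}$ records the reachability qualifier $q$ of $x$. Subqualifying $\Gamma \vdash p <: q$ is generated by: transitivity; congruence ($p<:q$ and $r<:s$ give $p,r <: q,s$); subset inclusion ($p\subseteq q$ gives $p<:q$); variable expansion ($x : T^{q}\in\Gamma$ with $\diamond\notin q$ and $\square\notin q$ gives $x <: q$, and similarly for type-variable bounds); and self-reference packing ($f : F^{q}\in\Gamma$ gives $q\setminus\{\diamond,\square\} <: f$). $B$ is the base type and $\mathsf{Ref}$ the reference type. *)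

(* Defs.v *)
From Stdlib Require Import List.
Import ListNotations.

(* Names of term and type variables (a single namespace). *)
Definition name := nat.

Inductive atom : Type :=
| AVar : name -> atom
| ADiamond : atom
| AHole : atom.

(* A qualifier is a finite set of atoms, represented as a list;
   set membership is List.In and sets are compared by inclusion. *)
Definition qual := list atom.

Definition qunion (p q : qual) : qual := p ++ q.
Definition qvar (x : name) : qual := [AVar x].
Definition qsubset (p q : qual) : Prop := forall t, In t p -> In t q.

Definition is_marker (t : atom) : bool :=
  match t with ADiamond | AHole => true | AVar _ => false end.

Definition qstrip (q : qual) : qual := filter (fun t => negb (is_marker t)) q.

Inductive ty : Type :=
| TTop : ty
| TBase : ty
| TRef : ty -> ty
| TVar : name -> ty
| TFun : name -> name -> ty -> qual -> ty -> qual -> ty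
    (* f(x : T1^q1) -> T2^q2, with self-name f *)
| TAll : name -> name -> ty -> qual -> ty -> qual -> ty.
    (* f[X <: T1^q1] -> T2^q2, with self-name f *)

(* Self-referential (function) types: those admitting self-reference packing. *)
Definition is_fun_ty (T : ty) : Prop :=
  match T with TFun _ _ _ _ _ _ | TAll _ _ _ _ _ _ => True | _ => False end.

Inductive entry : Type :=
| CVar : name -> ty -> qual -> entry
| CTVar : name -> ty -> qual -> entry.

Definition ctx := list entry.

Inductive subq (G : ctx) : qual -> qual -> Prop :=
| sq_trans : forall p q r, subq G p q -> subq G q r -> subq G p r
| sq_cong : forall p q r s, subq G p q -> subq G r s ->
    subq G (qunion p r) (qunion q s)
| sq_sub : forall p q, qsubset p q -> subq G p q
| sq_var : forall x T q, In (CVar x T q) G ->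
    ~ In ADiamond q -> ~ In AHole q -> subq G (qvar x) q
| sq_tvar : forall X T q, In (CTVar X T q) G ->
    ~ In ADiamond q -> ~ In AHole q -> subq G (qvar X) q
| sq_self : forall f F q, In (CVar f F q) G -> is_fun_ty F ->
    subq G (qstrip q) (qvar f).

Definition qual_diff (G : ctx) (p r q : qual) : Prop :=
  subq G p (qunion r q) /\
  forall q', subq G p (qunion r q') -> subq G q' q -> subq G q q'.

Definition principal_qual_diff (G : ctx) (p r q : qual) : Prop :=
  qual_diff G p r q /\ forall q', qual_diff G p r q' -> subq G q q'.

(* Main.v *)
Require Import Defs.
From Stdlib Require Import List.
Import ListNotations.

Definition G0 : ctx := [CVar 0 (TRef TBase) [ADiamond];
                  CVar 1 (TRef TBase) [ADiamond];
                  CVar 2 (TRef TBase) [AVar 0; AVar 1]].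

Definition sem (I : atom -> Prop) (q : qual) : Prop := exists t, In t q /\ I t.

Lemma sound (I : atom -> Prop) (HI : I (AVar 2) -> I (AVar 0) \/ I (AVar 1)) :
  forall p q, subq G0 p q -> sem I p -> sem I q.
Proof.
  intros p q H; induction H; intros Hs.
  - auto.
  - destruct Hs as [t [Ht It]]. unfold qunion in Ht.
    apply in_app_or in Ht as [Ht|Ht].
    + destruct (IHsubq1 (ex_intro _ t (conj Ht It))) as [u [Hu Iu]].
      exists u; split; auto. apply in_or_app; auto.
    + destruct (IHsubq2 (ex_intro _ t (conj Ht It))) as [u [Hu Iu]].
      exists u; split; auto. apply in_or_app; auto.
  - destruct Hs as [t [Ht It]]. exists t; auto.
  - destruct Hs as [t [Ht It]]. destruct Ht as [<-|[]].
    simpl in H. destruct H as [H|[H|[H|[]]]]; inversion H; subst.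
    + exfalso; apply H0; simpl; auto.
    + exfalso; apply H0; simpl; auto.
    + destruct (HI It) as [Ia|Ib].
      * exists (AVar 0); simpl; auto.
      * exists (AVar 1); simpl; auto.
  - simpl in H. destruct H as [H|[H|[H|[]]]]; inversion H.
  - simpl in H. destruct H as [H|[H|[H|[]]]]; inversion H; subst; simpl in H0; contradiction.
Qed.

Definition Ibc (t : atom) : Prop := t = AVar 1 \/ t = AVar 2.
Definition Iac (t : atom) : Prop := t = AVar 0 \/ t = AVar 2.
Definition Ib (t : atom) : Prop := t = AVar 1.

Lemma HIbc : Ibc (AVar 2) -> Ibc (AVar 0) \/ Ibc (AVar 1).
Proof. intros; right; left; reflexivity. Qed.
Lemma HIac : Iac (AVar 2) -> Iac (AVar 0) \/ Iac (AVar 1).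
Proof. intros; left; left; reflexivity. Qed.
Lemma HIb : Ib (AVar 2) -> Ib (AVar 0) \/ Ib (AVar 1).
Proof. intros H; discriminate H. Qed.

Lemma not_b_c : ~ subq G0 (qvar 1) (qvar 2).
Proof.
  intros H. destruct (sound Ib HIb _ _ H) as [t [Ht It]].
  - exists (AVar 1); simpl; unfold Ib; auto.
  - destruct Ht as [<-|[]]; discriminate It.
Qed.

Lemma not_c_b : ~ subq G0 (qvar 2) (qvar 1).
Proof.
  intros H. destruct (sound Iac HIac _ _ H) as [t [Ht It]].
  - exists (AVar 2); simpl; unfold Iac; auto.
  - destruct Ht as [<-|[]]; destruct It as [E|E]; discriminate E.
Qed.

Lemma bc_in q : subq G0 (qvar 2) (qunion (qvar 0) q) -> In (AVar 1) q \/ In (AVar 2) q.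
Proof.
  intros H. destruct (sound Ibc HIbc _ _ H) as [t [Ht It]].
  - exists (AVar 2); simpl; unfold Ibc; auto.
  - simpl in Ht. destruct Ht as [<-|Ht].
    + destruct It as [E|E]; discriminate E.
    + destruct It as [->| ->]; auto.
Qed.

Lemma in_b_not_c q : In (AVar 1) q -> ~ subq G0 q (qvar 2).
Proof.
  intros Hi H. destruct (sound Ib HIb _ _ H) as [t [Ht It]].
  - exists (AVar 1); split; auto; reflexivity.
  - destruct Ht as [<-|[]]; discriminate It.
Qed.

Lemma in_c_not_b q : In (AVar 2) q -> ~ subq G0 q (qvar 1).
Proof.
  intros Hi H. destruct (sound Iac HIac _ _ H) as [t [Ht It]].
  - exists (AVar 2); split; auto; right; reflexivity.
  - destruct Ht as [<-|[]]; destruct It as [E|E]; discriminate E.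
Qed.

Lemma sub_in x q : In (AVar x) q -> subq G0 (qvar x) q.
Proof. intros H. apply sq_sub. intros t [<-|[]]; auto. Qed.

Lemma diff_b : qual_diff G0 (qvar 2) (qvar 0) (qvar 1).
Proof.
  split.
  - eapply sq_var with (T := TRef TBase); simpl; auto.
    + intros [E|[E|[]]]; discriminate E.
    + intros [E|[E|[]]]; discriminate E.
  - intros q' H1 H2. destruct (bc_in q' H1) as [Hi|Hi].
    + apply sub_in; auto.
    + exfalso; exact (in_c_not_b q' Hi H2).
Qed.

Lemma diff_c : qual_diff G0 (qvar 2) (qvar 0) (qvar 2).
Proof.
  split.
  - apply sq_sub. intros t [<-|[]]; simpl; auto.
  - intros q' H1 H2. destruct (bc_in q' H1) as [Hi|Hi].
    + exfalso; exact (in_b_not_c q' Hi H2).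
    + apply sub_in; auto.
Qed.

Theorem mainTheorem1 :
  let a := 0 in let b := 1 in let c := 2 in
  let G : ctx := [CVar a (TRef TBase) [ADiamond];
                  CVar b (TRef TBase) [ADiamond];
                  CVar c (TRef TBase) [AVar a; AVar b]] in
  qual_diff G (qvar c) (qvar a) (qvar b) /\
  qual_diff G (qvar c) (qvar a) (qvar c) /\
  ~ subq G (qvar b) (qvar c) /\
  ~ subq G (qvar c) (qvar b) /\
  ~ (exists q, principal_qual_diff G (qvar c) (qvar a) q).
Proof.
  cbv zeta. fold G0.
  split; [exact diff_b|]. split; [exact diff_c|].
  split; [exact not_b_c|]. split; [exact not_c_b|].
  intros [q [[H1 _] H]].
  pose proof (H _ diff_b) as Hb. pose proof (H _ diff_c) as Hc.
  destruct (bc_in q H1) as [Hi|Hi].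
  - exact (in_b_not_c q Hi Hc).
  - exact (in_c_not_b q Hi Hb).
Qed.
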